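(* Let $K$ be a division ring and $M,N\ge2$ integers. Suppose $G$ is a torsion-free group and $c,d\in K[G]$ of ranks $M$ and $N$ respectively both contain the identity of $G$ in their supports and satisfy $cd=1$. Write $c=r_0c_0+\dots+r_{M-1}c_{M-1}$ and $d=s_0d_0+\dots+s_{N-1}d_{N-1}$ with pairwise distinct $c_i\in G$, pairwise distinct $d_j\in G$, nonzero $r_i,s_j\in K$ and $c_0=d_0=1$. Let $\sigma$ be the partition of $\{0,\dots,M-1\}\times\{0,\dots,N-1\}$ with $(i,j)\sim_\sigma(i',j')$ iff $c_id_j=c_{i'}d_{j'}$, and let $\pi\le\sigma$ be any partition realizable with $r_0,\dots,r_{M-1},s_0,\dots,s_{N-1}$. Suppose that for all $(m,n)$ with $2\le m\le M$, $2\le n\le N$, $(m,n)\ne(M,N)$, there is no torsion-free group $G'$ and $x,y\in K[G']$ with $\operatorname{rank}(x)=m$, $\operatorname{rank}(y)=n$, $xy=1$. Then $\pi$ has no proper invariant subgrids.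
   Context: $K[G]$ is the group ring; the rank of an element is the number of group elements with nonzero coefficient. $\pi\le\sigma$ means every block of $\pi$ is contained in a block of $\sigma$; $(i,j)\sim_\pi(i',j')$ means same block. $\pi$ is realizable with nonzero $r_i,s_j\in K$ if for each block $E$, $\sum_{(i,j)\in E}r_is_j$ equals $1$ if $(0,0)\in E$, else $0$. An invariant subgrid of a partition $\pi$ of $\{0,\dots,M-1\}\times\{0,\dots,N-1\}$ is a pair $(R,C)$ with $0\in R\subseteq\{0,\dots,M-1\}$, $0\in C\subseteq\{0,\dots,N-1\}$, $|R|\ge2$, $|C|\ge2$, such that whenever $(i,j)\in R\times C$ and $(i,j)\sim_\pi(i',j')$ then $(i',j')\in R\times C$; it is proper if $|R|<M$ or $|C|<N$. *)

(* Defs.v *)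
From HB Require Import structures.
From mathcomp Require Import all_boot all_order all_algebra.
Set Implicit Arguments. Unset Strict Implicit. Unset Printing Implicit Defensive.
Import GRing.Theory.

Local Open Scope ring_scope.

Definition division_ring (K : unitRingType) : Prop :=
  forall x : K, x != 0 -> x \is a GRing.unit.

Definition torsion_free (G : groupType) : Prop :=
  forall (g : G) (n : nat), (0 < n)%N -> (g ^+ n)%g = 1%g -> g = 1%g.

(* An element of the group ring K[G]: a finitely supported function
   G -> K, together with the duplicate-free list of its support. *)
Record grelt (K : unitRingType) (G : groupType) := GrElt {
  gcoef : G -> K;
  gsupp : seq G;
  gsupp_uniq : uniq gsupp;
  gsuppP : forall g, (g \in gsupp) = (gcoef g != 0)
}.

Definition grank (K : unitRingType) (G : groupType) (x : grelt K G) : nat :=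
  size (gsupp x).

Definition grmul (K : unitRingType) (G : groupType) (x y : grelt K G) : G -> K :=
  fun g => \sum_(a <- gsupp x) gcoef x a * gcoef y (a^-1 * g)%g.

Definition grone (K : unitRingType) (G : groupType) : G -> K :=
  fun g => (g == 1%g)%:R.

Definition gr_mul_is_one (K : unitRingType) (G : groupType) (x y : grelt K G) : Prop :=
  forall g, grmul x y g = @grone K G g.

Definition sigma_part (G : groupType) (M N : nat) (cs : 'I_M -> G) (ds : 'I_N -> G)
  : {set {set 'I_M * 'I_N}} :=
  [set [set q | (cs q.1 * ds q.2 == cs p.1 * ds p.2)%g] | p : 'I_M * 'I_N].

Definition part_le (T : finType) (P S : {set {set T}}) : Prop :=
  forall E, E \in P -> exists2 F, F \in S & E \subset F.

Definition has_origin (M N : nat) (E : {set 'I_M * 'I_N}) : bool :=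
  [exists p in E, (val p.1 == 0%N) && (val p.2 == 0%N)].

Definition realizable (K : unitRingType) (M N : nat) (P : {set {set 'I_M * 'I_N}})
  (r : 'I_M -> K) (s : 'I_N -> K) : Prop :=
  forall E, E \in P -> \sum_(p in E) r p.1 * s p.2 = (has_origin E)%:R.

Definition same_block (T : finType) (P : {set {set T}}) (p q : T) : Prop :=
  exists2 E, E \in P & (p \in E) && (q \in E).

Definition invariant_subgrid (M N : nat) (P : {set {set 'I_M * 'I_N}})
  (R : {set 'I_M}) (C : {set 'I_N}) : Prop :=
  [/\ forall i : 'I_M, val i = 0%N -> i \in R,
      forall j : 'I_N, val j = 0%N -> j \in C,
      (2 <= #|R|)%N, (2 <= #|C|)%N &
      forall p q : 'I_M * 'I_N, p.1 \in R -> p.2 \in C -> same_block P p q ->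
        (q.1 \in R) && (q.2 \in C)].

Definition proper_invariant_subgrid (M N : nat) (P : {set {set 'I_M * 'I_N}})
  (R : {set 'I_M}) (C : {set 'I_N}) : Prop :=
  invariant_subgrid P R C /\ ((#|R| < M)%N \/ (#|C| < N)%N).

(* Main.v *)
Require Import Defs.
From HB Require Import structures.
From mathcomp Require Import all_boot all_order all_algebra.
Local Open Scope ring_scope.
Import GRing.Theory.

Lemma restr_ex (K : unitRingType) (G : groupType) (n : nat) (c : grelt K G)
  (cs : 'I_n -> G) (R : {set 'I_n}) :
  injective cs -> (forall i, cs i \in gsupp c) ->
  exists x : grelt K G, gsupp x = map cs (enum R) /\
    forall g, gcoef x g = if g \in map cs (enum R) then gcoef c g else 0.
Proof.
move=> inj Hs.
have U : uniq (map cs (enum R)) by rewrite map_inj_uniq // enum_uniq.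
have Pp : forall g, (g \in map cs (enum R)) =
   ((if g \in map cs (enum R) then gcoef c g else 0) != 0).
  move=> g; case: ifP => [H|]; last by rewrite eqxx.
  by case/mapP: H => i _ ->; rewrite -gsuppP Hs.
by exists (GrElt U Pp).
Qed.

Lemma rank_restr (K : unitRingType) (G : groupType) (n : nat) (x : grelt K G)
  (cs : 'I_n -> G) (R : {set 'I_n}) : gsupp x = map cs (enum R) -> grank x = #|R|.
Proof. by move=> E; rewrite /grank E size_map cardE. Qed.

Theorem lemma6p9 (K : unitRingType) (M N : nat) (G : groupType)
  (c d : grelt K G) (cs : 'I_M -> G) (ds : 'I_N -> G)
  (P : {set {set 'I_M * 'I_N}}) :
  division_ring K ->
  (2 <= M)%N -> (2 <= N)%N ->
  torsion_free G ->
  grank c = M -> grank d = N ->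
  1%g \in gsupp c -> 1%g \in gsupp d ->
  gr_mul_is_one c d ->
  (* c = sum_i r_i c_i with pairwise distinct c_i in the support, c_0 = 1 *)
  injective cs -> (forall i, cs i \in gsupp c) -> (forall i, val i = 0%N -> cs i = 1%g) ->
  injective ds -> (forall j, ds j \in gsupp d) -> (forall j, val j = 0%N -> ds j = 1%g) ->
  partition P [set: 'I_M * 'I_N] ->
  part_le P (sigma_part cs ds) ->
  realizable P (fun i => gcoef c (cs i)) (fun j => gcoef d (ds j)) ->
  (forall m n : nat, (2 <= m <= M)%N -> (2 <= n <= N)%N -> (m, n) <> (M, N) ->
     forall (G' : groupType), torsion_free G' ->
     forall x y : grelt K G', grank x = m -> grank y = n -> ~ gr_mul_is_one x y) ->
  ~ (exists (R : {set 'I_M}) (C : {set 'I_N}), proper_invariant_subgrid P R C).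
Proof.
move=> _ M2 N2 tf _ _ _ _ _ injc Hcs Hc0 injd Hds Hd0 Hpart Hle Hreal Hmin
  [R [C [[HR0 HC0 R2 C2 Hinv] Hprop]]].
have [x [Sx Cx]] := @restr_ex K G M c cs R injc Hcs.
have [y [Sy Cy]] := @restr_ex K G N d ds C injd Hds.
have rx := rank_restr _ _ _ _ _ _ Sx; have ry := rank_restr _ _ _ _ _ _ Sy.
have hm : (2 <= #|R| <= M)%N /\ (2 <= #|C| <= N)%N /\ (#|R|, #|C|) <> (M, N).
  split; last split.
  - by rewrite R2 /= -[X in (_ <= X)%N]card_ord max_card.
  - by rewrite C2 /= -[X in (_ <= X)%N]card_ord max_card.
  - by case=> eR eC; case: Hprop; rewrite ?eR ?eC ltnn.
case: hm => h1 [h2 h3]; apply: (Hmin _ _ h1 h2 h3 G tf x y rx ry).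
pose r i := gcoef c (cs i); pose s j := gcoef d (ds j).
pose S p := (p.1 \in R) && (p.2 \in C).
pose i0 : 'I_M := Ordinal (ltn_trans (isT : (0 < 1)%N) M2).
pose j0 : 'I_N := Ordinal (ltn_trans (isT : (0 < 1)%N) N2).
pose o := (i0, j0).
have Ho : forall p : 'I_M * 'I_N, ((val p.1 == 0%N) && (val p.2 == 0%N)) = (p == o).
  move=> [a b]; rewrite xpair_eqE /=.
  by congr (_ && _); apply/eqP/eqP => [h|-> //]; apply: val_inj.
have oS : S o by rewrite /S HR0 ?HC0.
have o1 : (cs o.1 * ds o.2 = 1)%g by rewrite Hc0 // Hd0 // mulg1.
move=> g.
pose F p := if S p && (cs p.1 * ds p.2 == g)%g then r p.1 * s p.2 else 0.
have step1 : grmul x y g = \sum_p F p.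
  rewrite /grmul Sx big_map big_enum /=.
  rewrite (eq_bigr (fun i => \sum_(j in C) F (i, j))); last first.
    move=> i iR; rewrite Cx map_f ?mem_enum // Cy.
    case: ifP => [/mapP [j] | nin].
      rewrite mem_enum => jC Ej; rewrite Ej.
      rewrite (bigD1 j) //= big1 ?addr0.
        rewrite /F /S /= iR jC /=.
        have -> : (cs i * ds j == g)%g by rewrite -Ej mulVKg.
        by [].
      move=> k /andP [kC kj]; rewrite /F /S /= iR kC /=; case: eqP => // E.
      by move/eqP: kj; case; apply: injd; rewrite -Ej -E mulKg.
    rewrite mulr0 big1 // => j jC; rewrite /F /S /= iR jC /=; case: eqP => // E.
    by move: nin; rewrite -E mulKg map_f // mem_enum.
  rewrite pair_big_dep /=.
  rewrite [RHS](bigID S) /= [X in _ + X]big1 ?addr0 => [|p /negbTE nS]; last by rewrite /F nS.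
  by apply: eq_bigl => p.
rewrite step1 /grone.
have cov : cover P = [set: 'I_M * 'I_N] by apply: cover_partition.
have triv : trivIset P by case/and3P: Hpart.
have nz : set0 \notin P by case/and3P: Hpart.
have -> : \sum_p F p = \sum_(p in cover P) F p by apply: eq_bigl => p; rewrite cov inE.
rewrite big_trivIset //.
have blk : forall E, E \in P -> \sum_(p in E) F p = ((o \in E) && (g == 1%g))%:R.
  move=> E EP.
  have [p0 p0E] : exists p0, p0 \in E.
    by apply/set0Pn; apply: contraNneq nz => <-.
  have [Fs Fs1 EF] := Hle E EP.
  have [q Fq] : exists q, Fs = [set p | (cs p.1 * ds p.2 == cs q.1 * ds q.2)%g].
    by move/imsetP: Fs1 => [q _ ->]; exists q.
  have hc : forall p, p \in E -> (cs p.1 * ds p.2 = cs p0.1 * ds p0.2)%g.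
    move=> p pE; have := subsetP EF p pE; have := subsetP EF p0 p0E.
    by rewrite Fq !inE => /eqP -> /eqP ->.
  have hS : forall p, p \in E -> S p = S p0.
    move=> p pE; apply/idP/idP => H.
      by apply: (Hinv p p0) => //; [case/andP: H | case/andP: H | exists E => //; rewrite pE p0E].
    by apply: (Hinv p0 p) => //; [case/andP: H | case/andP: H | exists E => //; rewrite pE p0E].
  pose b := S p0 && (cs p0.1 * ds p0.2 == g)%g.
  rewrite (eq_bigr (fun p => if b then r p.1 * s p.2 else 0)); last first.
    by move=> p pE; rewrite /F hS // hc.
  have hor : has_origin E = (o \in E).
    apply/existsP/idP => [[p /andP [pE]]|oE]; first by rewrite Ho => /eqP <-.
    by exists o; rewrite oE Ho /=.
  have -> : ((o \in E) && (g == 1%g)) = b && has_origin E.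
    rewrite hor; case: (boolP (o \in E)) => oE; last by rewrite andbF.
    by rewrite andbT /b -(hS o oE) oS -(hc o oE) o1 eq_sym.
  case: b; last by rewrite big1.
  by rewrite (Hreal E EP).
rewrite (eq_bigr _ blk).
have oP : pblock P o \in P by rewrite pblock_mem // cov inE.
rewrite (bigD1 (pblock P o)) //= mem_pblock cov inE /=.
rewrite big1 ?addr0 // => E /andP [EP nE].
case: (boolP (o \in E)) => //= oE.
by move: nE; rewrite (def_pblock triv EP oE) eqxx.
Qed.
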